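(* Let $\mathcal{T}$ be a tangle of order $k$ in a connectivity system $(E,\lambda)$, and let $\mathcal{S}$ be a tree compatible set. If $(R,G)$ is a $(k,\mathcal{S})$-separation, then there is an $\mathcal{S}$-tight $\mathcal{S}$-maximal $k$-flower in $\mathcal{T}$ that displays a $(k,\mathcal{S})$-separation that is $\mathcal{T}$-equivalent to $(R,G)$.
   Context: A connectivity system is a pair $(E,\lambda)$ with $E$ finite and $\lambda$ integer-valued, symmetric and submodular on subsets of $E$. $X$ is $k$-separating if $\lambda(X)\le k$; a $k$-separation is an unordered partition $(X,E-X)$ with $\lambda(X)\le k$. A tangle of order $k$ is a collection $\mathcal T$ of subsets of $E$ with (T1) $\lambda(A)<k$ for $A\in\mathcal T$; (T2) if $\lambda(A)\le k-1$ then $A$ or $E-A$ is in $\mathcal T$; (T3) $A\cup B\cup C\ne E$ for $A,B,C\in\mathcal T$; (T4) $E-\{e\}\notin\mathcal T$. A set is $\mathcal T$-weak if contained in a member of $\mathcal T$, otherwise $\mathcal T$-strong; partitions/$k$-separations are $\mathcal T$-strong if all parts are. A $\mathcal T$-strong $k$-separating $X$ is fully closed if $X\cup Y$ is not $k$-separating for every nonempty $\mathcal T$-weak $Y\subseteq E-X$; $\mathrm{fcl}_{\mathcal T}(X)$ is the intersection of all fully closed $k$-separating sets containing $X$. $\mathcal T$-strong $k$-separations $(X,Y),(X',Y')$ are $\mathcal T$-equivalent if $\{\mathrm{fcl}_{\mathcal T}(X),\mathrm{fcl}_{\mathcal T}(Y)\}=\{\mathrm{fcl}_{\mathcal T}(X'),\mathrm{fcl}_{\mathcal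 T}(Y')\}$. $X$ is $\mathcal T$-sequential if it is $k$-separating, $E-X$ is $\mathcal T$-strong and $\mathrm{fcl}_{\mathcal T}(E-X)=E$. $\mathcal S$ is a set of non-$\mathcal T$-sequential $k$-separating sets with $\mathcal T$-strong complements; a $(k,\mathcal S)$-separation is a $k$-separation $(X,E-X)$ with $X,E-X\in\mathcal S$; $\mathcal S$ is tree compatible if (S1) any $\mathcal T$-strong $k$-separation $\mathcal T$-equivalent to a $(k,\mathcal S)$-separation is one, and (S2) $X\in\mathcal S$, $(Y,E-Y)$ a $\mathcal T$-strong $k$-separation and $X\subseteq Y$ imply $Y\in\mathcal S$. A $k$-flower in $\mathcal T$ is a $\mathcal T$-strong partition $(P_1,\dots,P_n)$ of $E$ ($n\ge1$) with $P_i$ and $P_i\cup P_{i+1}$ $k$-separating for all $i$ (mod $n$); it displays $(X,E-X)$ if $X$ is a union of petals. $\Phi_1\preccurlyeq_{\mathcal S}\Phi_2$ if each $(k,\mathcal S)$-separation displayed by $\Phi_1$ is $\mathcal T$-equivalent to some $(k,\mathcal S)$-separation displayed by $\Phi_2$; equivalence means both directions; $\Phi$ is $\mathcal S$-tight if not equivalent to a $k$-flower with fewer petals, and $\mathcal S$-maximal if $\Phi\preccurlyeq_{\mathcal S}\Phi'$ implies $\Phi'\preccurlyeq_{\mathcal S}\Phi$. *)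

(* Defs.v *)
From mathcomp Require Import all_boot all_order all_algebra.
Set Implicit Arguments. Unset Strict Implicit. Unset Printing Implicit Defensive.
Import Order.TTheory GRing.Theory Num.Theory.
Local Open Scope ring_scope.

Section Tangles.
Variable E : finType.
Variable lam : {set E} -> int.
Variable k : int.

Definition connectivity_system : Prop :=
  (forall X : {set E}, lam X = lam (~: X)) /\
  (forall X Y : {set E}, lam (X :&: Y) + lam (X :|: Y) <= lam X + lam Y).

Definition ksep (X : {set E}) : bool := lam X <= k.

Definition tangle (T : {set {set E}}) : Prop :=
  [/\ (forall A, A \in T -> lam A < k),
      (forall A, lam A <= k - 1 -> A \in T \/ ~: A \in T),
      (forall A B C, A \in T -> B \in T -> C \in T -> A :|: B :|: C != setT)
    & (forall e : E, ~: [set e] \notin T)].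

Variable T : {set {set E}}.

Definition Tweak (Y : {set E}) : bool := [exists A in T, Y \subset A].
Definition Tstrong (Y : {set E}) : bool := ~~ Tweak Y.

Definition fully_closed (X : {set E}) : bool :=
  [&& Tstrong X, ksep X &
   [forall Y : {set E},
      ((Y != set0) && Tweak Y && (Y \subset ~: X)) ==> ~~ ksep (X :|: Y)]].

Definition fcl (X : {set E}) : {set E} :=
  \bigcap_(Z | fully_closed Z && (X \subset Z)) Z.

(* a k-separation (X, E - X) is represented by the set X *)
Definition Tstrong_ksep (X : {set E}) : bool :=
  [&& ksep X, Tstrong X & Tstrong (~: X)].

Definition Tequiv (X X' : {set E}) : bool :=
  ((fcl X == fcl X') && (fcl (~: X) == fcl (~: X'))) ||
  ((fcl X == fcl (~: X')) && (fcl (~: X) == fcl X')).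

Definition Tsequential (X : {set E}) : bool :=
  [&& ksep X, Tstrong (~: X) & fcl (~: X) == setT].

Variable S : {set {set E}}.

Definition S_admissible : Prop :=
  forall X, X \in S -> [&& ~~ Tsequential X, ksep X & Tstrong (~: X)].

Definition kS_sep (X : {set E}) : bool :=
  [&& ksep X, X \in S & ~: X \in S].

Definition tree_compatible : Prop :=
  S_admissible /\
  (forall X X', kS_sep X -> Tstrong_ksep X' -> Tequiv X X' -> kS_sep X') /\
  (forall X Y, X \in S -> Tstrong_ksep Y -> X \subset Y -> Y \in S).

(* k-flowers in T, given as the sequence of petals (P_1, ..., P_n) *)
Definition kflower (P : seq {set E}) : Prop :=
  let n := size P in
  [/\ (0 < n)%N,
      (forall i, (i < n)%N -> nth set0 P i != set0),
      (forall i j, (i < n)%N -> (j < n)%N -> i != j ->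
                   [disjoint nth set0 P i & nth set0 P j]),
      (\bigcup_(Q <- P) Q = setT)
    & [/\ (forall i, (i < n)%N -> Tstrong (nth set0 P i)),
           (forall i, (i < n)%N -> ksep (nth set0 P i))
         & (forall i, (i < n)%N ->
              ksep (nth set0 P i :|: nth set0 P ((i.+1) %% n)%N))]].

Definition displays (P : seq {set E}) (X : {set E}) : Prop :=
  exists m : bitseq, X = \bigcup_(Q <- mask m P) Q.

Definition flower_le (P1 P2 : seq {set E}) : Prop :=
  forall X, displays P1 X -> kS_sep X ->
    exists X', [/\ displays P2 X', kS_sep X' & Tequiv X X'].

Definition flower_equiv (P1 P2 : seq {set E}) : Prop :=
  flower_le P1 P2 /\ flower_le P2 P1.

Definition S_tight (P : seq {set E}) : Prop :=
  ~ exists P', [/\ kflower P', (size P' < size P)%N & flower_equiv P P'].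

Definition S_maximal (P : seq {set E}) : Prop :=
  forall P', kflower P' -> flower_le P P' -> flower_le P' P.

End Tangles.

(* Main.v *)
Require Import Defs.
From mathcomp Require Import all_boot all_order all_algebra.
From mathcomp Require Import zify.
From Stdlib Require Import Classical ClassicalEpsilon.
Set Implicit Arguments. Unset Strict Implicit. Unset Printing Implicit Defensive.
Local Open Scope ring_scope.

Definition asb (P : Prop) : bool :=
  if excluded_middle_informative P then true else false.

Lemma asbE (P : Prop) : asb P <-> P.
Proof. by rewrite /asb; case: excluded_middle_informative. Qed.

Lemma Tequiv_refl (E : finType) lam k T (X : {set E}) : Tequiv lam k T X X.
Proof. by rewrite /Tequiv !eqxx. Qed.

Lemma Tequiv_sym (E : finType) lam k T (X Y : {set E}) :
  Tequiv lam k T X Y -> Tequiv lam k T Y X.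
Proof.
rewrite /Tequiv => /orP[/andP[/eqP h1 /eqP h2]|/andP[/eqP h1 /eqP h2]];
  by rewrite h1 h2 !eqxx ?orbT.
Qed.

Lemma Tequiv_trans (E : finType) lam k T (X Y Z : {set E}) :
  Tequiv lam k T X Y -> Tequiv lam k T Y Z -> Tequiv lam k T X Z.
Proof.
rewrite /Tequiv => /orP[/andP[/eqP h1 /eqP h2]|/andP[/eqP h1 /eqP h2]]
  /orP[/andP[/eqP h3 /eqP h4]|/andP[/eqP h3 /eqP h4]];
  by rewrite -h3 -h4 -h1 -h2 !eqxx ?orbT.
Qed.

Definition Uset (E : finType) lam k T S (P : seq {set E}) : {set {set E}} :=
  [set Y | kS_sep lam k S Y &&
     asb (exists X, [/\ displays P X, kS_sep lam k S X & Tequiv lam k T X Y])].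

Lemma le_U (E : finType) lam k T S (P1 P2 : seq {set E}) :
  flower_le lam k T S P1 P2 -> Uset lam k T S P1 \subset Uset lam k T S P2.
Proof.
move=> hle; apply/subsetP => Y; rewrite !inE => /andP[hY /asbE[X [hd hX he]]].
rewrite hY /=; apply/asbE.
have [X' [hd' hX' he']] := hle X hd hX.
exists X'; split => //; exact: Tequiv_trans (Tequiv_sym he') he.
Qed.

Lemma U_le (E : finType) lam k T S (P1 P2 : seq {set E}) :
  Uset lam k T S P1 \subset Uset lam k T S P2 -> flower_le lam k T S P1 P2.
Proof.
move=> /subsetP hs X hd hX.
have : X \in Uset lam k T S P1.
  by rewrite inE hX /=; apply/asbE; exists X; split => //; exact: Tequiv_refl.
move/hs; rewrite inE => /andP[_ /asbE[X' [hd' hX' he']]].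
by exists X'; split => //; exact: Tequiv_sym.
Qed.

Theorem lemma6p2 (E : finType) (lam : {set E} -> int) (k : int)
  (T S : {set {set E}}) :
  connectivity_system lam ->
  tangle lam k T ->
  tree_compatible lam k T S ->
  forall R : {set E}, kS_sep lam k S R ->
  exists P : seq {set E},
    [/\ kflower lam k T P, S_tight lam k T S P, S_maximal lam k T S P &
        exists X : {set E},
          [/\ displays P X, kS_sep lam k S X & Tequiv lam k T X R]].
Proof.
move=> [hsym hsub] [hT1 hT2 hT3 hT4] [hadm [hS1 hS2]] R hR.
have hR' := hR; move/and3P: hR' => [kR RS cRS].
have [/and3P[nsR _ scR] /and3P[nscR kcR sR]] := (hadm R RS, hadm _ cRS).
rewrite setCK in sR.
have strT : Tstrong T setT.
  apply/negP => /existsP[A /andP[AT]]; rewrite subTset => /eqP eA.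
  by move: (hT3 A A A AT AT AT); rewrite eA !setUid eqxx.
have fclT : fcl lam k T setT = setT.
  apply/setP => x; rewrite inE; apply/bigcapP => Z /andP[_].
  by rewrite subTset => /eqP ->; rewrite inE.
have ne0 : forall X : {set E}, ~~ Tsequential lam k T X -> ksep lam k X -> X != set0.
  move=> X hX kX; apply/eqP => eX; move: hX; rewrite /Tsequential eX setC0.
  by rewrite -eX kX strT fclT eqxx.
have kT : ksep lam k setT.
  have := hsub R (~: R); rewrite setICr setUCr -(hsym R) (hsym set0) setC0.
  move: kR; rewrite /ksep => kR' h; lia.
set P0 := [:: R; ~: R].
have fl0 : kflower lam k T P0.
  split => //.
  - by case=> [|[|i]] //= _; exact: ne0.
  - case=> [|[|i]] [|[|j]] //= _ _ _; by rewrite ?disjointsCr ?disjointsCl ?disjoints_subset ?setCK.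
  - by rewrite big_cons big_seq1 setUCr.
  - split.
    + by case=> [|[|i]].
    + by case=> [|[|i]].
    + case=> [|[|i]] //= _; first by rewrite setUCr.
      by rewrite setUC setUCr.
pose C P := kflower lam k T P /\ flower_le lam k T S P0 P.
have C0 : C P0 by split => //; apply: U_le.
pose U := Uset lam k T S.
pose pm := fun n => asb (exists P, C P /\ #|U P| = n).
have exm : exists n, pm n by exists #|U P0|; apply/asbE; exists P0.
have ubm : forall n, pm n -> (n <= #|{set E}|)%N.
  by move=> n /asbE[P [_ <-]]; exact: max_card.
case: (ex_maxnP exm ubm) => N /asbE exN maxN.
pose pn := fun n => asb (exists P, [/\ C P, #|U P| = N & size P = n]).
have exn : exists n, pn n.
  by case: exN => P [CP hN]; exists (size P); apply/asbE; exists P.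
case: (ex_minnP exn) => M /asbE[P [[flP leP] hN hM]] minM.
have maxP : forall P', C P' -> flower_le lam k T S P P' -> U P = U P'.
  move=> P' CP' le'; apply/eqP; rewrite eqEcard le_U //= hN.
  by apply: maxN; apply/asbE; exists P'.
have trans : forall P', flower_le lam k T S P P' -> flower_le lam k T S P0 P'.
  by move=> P' le'; apply: U_le; apply: subset_trans (le_U leP) (le_U le').
exists P; split => //.
- move=> [P' [fl' sz [le1 le2]]].
  have CP' : C P' by split => //; exact: trans.
  suff : pn (size P') by move=> /minM; rewrite leqNgt -hM sz.
  apply/asbE.
  by exists P'; split => //; rewrite -(maxP P' CP' le1).
- move=> P' fl' le'.
  have CP' : C P' by split => //; exact: trans.
  by apply: U_le; have := maxP P' CP' le'; rewrite /U => ->.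
- have [X [hd hX he]] : exists X, [/\ displays P X, kS_sep lam k S X & Tequiv lam k T R X].
    apply: leP => //; exists [:: true; false]; by rewrite [mask _ _]/= big_seq1.
  by exists X; split => //; exact: Tequiv_sym.
Qed.
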